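(* Let $E$ be a countable set, $\Omega=[0,1]^E$ with its Borel $\sigma$-field $\mathcal F$ and the product $\mathbb P$ of uniform measures. Let $\mathcal A,\mathcal B\in\mathcal F$, $a,b\in(0,1)$, $s\in\mathbb N$, and let $\Phi:\mathcal A\to\mathcal B$ be measurable. Suppose that for every $\omega'\in\Phi(\mathcal A)$ there is a set $S=S(\omega')\subset E$ with at most $s$ elements such that $$\Phi^{-1}(\omega')\subset\{\omega:\omega|_{S^c}=\omega'|_{S^c}\}\cap\bigcup_{L\subset S}\Big(\{\omega:\omega|_L=\tfrac1a\,\omega'|_L\}\cap\{\omega:\omega|_{S\setminus L}=\tfrac{\omega'-b}{1-b}\big|_{S\setminus L}\}\Big).$$ Then $\mathbb P[\mathcal A]\le\Big(\frac{2}{a\wedge(1-b)}\Big)^s\mathbb P[\mathcal B]$.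
   Context: For $\omega\in[0,1]^E$ and $S\subset E$, $\omega|_S$ denotes the restriction of $\omega$ to $S$; arithmetic operations on restrictions act coordinatewise. *)

(* Defs.v *)
From HB Require Import structures.
From mathcomp Require Import all_boot all_order all_algebra.
From mathcomp Require Import all_classical all_reals all_analysis.
Set Implicit Arguments. Unset Strict Implicit. Unset Printing Implicit Defensive.
Import Order.TTheory GRing.Theory Num.Theory.
Import numFieldNormedType.Exports.
Local Open Scope classical_set_scope.
Local Open Scope ring_scope.

Definition coord_sets (E : Type) (R : realType) : set (set (E -> R)) :=
  [set A | exists (e : E) (B : set R), measurable B /\ A = (fun w => w e) @^-1` B].

Notation Omega E R := (g_sigma_algebraType (@coord_sets E R)).

Definition cube (E : Type) (R : realType) : set (Omega E R) :=
  [set w | forall e, 0 <= w e <= 1].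

(* distribution function of the uniform law on [0,1] *)
Definition clamp01 (R : realType) (t : R) : R := Num.min 1 (Num.max 0 t).

(* P is the product of the uniform measures on [0,1], one for each coordinate:
   its finite-dimensional distributions are those of independent uniform
   variables on [0,1]. (These cylinder sets form a pi-system generating the
   product sigma-field, so this determines P uniquely.) *)
Definition uniform_product (E : countType) (R : realType)
  (P : probability (Omega E R) R) : Prop :=
  forall (F : seq E) (x : E -> R),
    P [set w | forall e, e \in F -> w e <= x e] =
    (\prod_(e <- undup F) clamp01 (x e))%:E.

(* Main.v *)
Require Import Defs.
From HB Require Import structures.
From mathcomp Require Import all_boot all_order all_algebra.
From mathcomp Require Import all_classical all_reals all_analysis.
From mathcomp Require Import ring lra measurable_realfun.
Import Order.TTheory GRing.Theory Num.Theory.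
Import numFieldNormedType.Exports.
Local Open Scope classical_set_scope.
Local Open Scope ring_scope.
Set Implicit Arguments. Unset Strict Implicit.



Section clamp.
Variable R : realType.
Lemma clamp_mono (x y : R) : x <= y -> clamp01 x <= clamp01 y.
Proof. by move=> xy; rewrite /clamp01 le_min2// le_max2. Qed.
Lemma clamp_id (t : R) : 0 <= t <= 1 -> clamp01 t = t.
Proof. by case/andP=> t0 t1; rewrite /clamp01 (max_r t0) (min_r t1). Qed.
Lemma clamp_neg (t : R) : t <= 0 -> clamp01 t = 0.
Proof. by move=> t0; rewrite /clamp01 (max_l t0) min_r. Qed.
Lemma clamp_ge1 (t : R) : 1 <= t -> clamp01 t = 1.
Proof. by move=> t1; rewrite /clamp01 max_r ?(le_trans _ t1)// min_l. Qed.
Lemma clamp_01 (t : R) : 0 <= clamp01 t <= 1.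
Proof. by rewrite /clamp01 le_min ler01 le_max lexx /= ge_min lexx. Qed.
End clamp.



Section box.
Variables (R : realType) (E : countType).
Local Notation O := (Omega E R).

Lemma mcoord (e : E) (B : set R) : measurable B -> measurable [set w : O | B (w e)].
Proof. by move=> mB; apply: sub_sigma_algebra; exists e, B; split. Qed.

Lemma mfin (U : seq E) (Bs : E -> set R) : (forall e, measurable (Bs e)) ->
  measurable [set w : O | forall e, e \in U -> Bs e (w e)].
Proof.
move=> mBs; elim: U => [|e U IH].
  by rewrite (_ : [set w : O | _] = setT); [exact: measurableT|apply/seteqP; split=> w].
rewrite (_ : [set w : O | _] = [set w : O | Bs e (w e)] `&` [set w : O | forall e, e \in U -> Bs e (w e)]).
  by apply: measurableI => //; exact: mcoord.
apply/seteqP; split=> w /=.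
  by move=> h; split => [|x xU]; apply: h; rewrite inE ?eqxx ?xU ?orbT.
by move=> [h1 h2] x; rewrite inE => /orP[/eqP->//|/h2].
Qed.

Lemma m_le (x : R) : measurable [set y : R | y <= x].
Proof.
rewrite (_ : [set y : R | y <= x] = `]-oo, x]%classic); first exact: measurable_itv.
by apply/seteqP; split=> y /=; rewrite in_itv.
Qed.

Lemma m_oc (x z : R) : measurable [set y : R | x < y <= z].
Proof.
rewrite (_ : [set y : R | x < y <= z] = `]x, z]%classic); first exact: measurable_itv.
by apply/seteqP; split=> y /=; rewrite in_itv.
Qed.

Definition qb (U F : seq E) (u c d : E -> R) : set O :=
  [set w | (forall e, e \in U -> w e <= u e) /\ (forall e, e \in F -> c e < w e <= d e)].

Lemma qb_meas U F u c d : measurable (qb U F u c d).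
Proof.
rewrite (_ : qb _ _ _ _ _ = [set w : O | forall e, e \in U -> [set y | y <= u e] (w e)]
   `&` [set w : O | forall e, e \in F -> [set y | c e < y <= d e] (w e)]).
  apply: measurableI.
    by apply: (@mfin U (fun e => [set y | y <= u e])) => e; exact: m_le.
  by apply: (@mfin F (fun e => [set y | c e < y <= d e])) => e; exact: m_oc.
by apply/seteqP; split=> w.
Qed.

Definition len (c d : R) := Num.max 0 (clamp01 d - clamp01 c).

Variable P : probability O R.
Hypothesis hP : uniform_product P.

Lemma box_formula (F U : seq E) (u c d : E -> R) : uniq F ->
  all (fun e => e \notin U) F ->
  P (qb U F u c d) = (\prod_(e <- undup U) clamp01 (u e) * \prod_(e <- F) len (c e) (d e))%:E.
Proof.
elim: F U u => [|e F IH] U u.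
  move=> _ _; rewrite big_nil mulr1 -hP; congr (P _).
  by apply/seteqP; split=> w /=; [case|split].
rewrite cons_uniq => /andP[eF uF] /= /andP[eU aF].
have [dc|cd] := leP (d e) (c e).
  rewrite (_ : qb _ _ _ _ _ = set0); last first.
    apply/seteqP; split=> w //= [_ h].
    by have /andP[h1 h2] := h e (mem_head _ _); move: (lt_le_trans h1 h2); rewrite ltNge dc.
  rewrite measure0 big_cons /len.
  by rewrite (max_l (_ : _ <= 0)) ?mul0r ?mulr0// subr_le0 clamp_mono.
pose u' := fun x => if x == e then d e else u x.
pose u'' := fun x => if x == e then c e else u x.
have aF' : all (fun x => x \notin e :: U) F.
  apply/allP => x xF; rewrite inE negb_or (allP aF x xF) andbT.
  by apply/eqP => xe; move: eF; rewrite -xe xF.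
have HX := IH (e :: U) u' uF aF'.
have HY := IH (e :: U) u'' uF aF'.
have YX : qb (e :: U) F u'' c d `<=` qb (e :: U) F u' c d.
  move=> w [h1 h2]; split => // x xU; have := h1 x xU; rewrite /u' /u''.
  by case: eqP => // _ h; apply: (le_trans h); apply: ltW.
have -> : qb U (e :: F) u c d = qb (e :: U) F u' c d `\` qb (e :: U) F u'' c d.
  apply/seteqP; split=> w /=.
    move=> [h1 h2]; have /andP[he1 he2] := h2 e (mem_head _ _); split.
      split=> [x|x xF]; last by apply: h2; rewrite inE xF orbT.
      rewrite inE /u'; case: eqP => [->//|_ /= xU]; exact: h1.
    by move=> [h _]; have := h e (mem_head _ _); rewrite /u'' eqxx leNgt he1.
  move=> [[h1 h2] nY]; split.
    move=> x xU; have := h1 x; rewrite inE xU orbT /u'; case: eqP => [xe|_]; last by apply.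
    by move: eU; rewrite -xe xU.
  move=> x; rewrite inE => /orP[/eqP->|xF]; last exact: h2.
  have := h1 e (mem_head _ _); rewrite /u' eqxx => -> ; rewrite andbT ltNge.
  apply/negP => we; apply: nY; split => //.
  move=> y yU; rewrite /u''; case: eqP => [->//|ne].
  by have := h1 y yU; rewrite /u' (introF eqP ne).
rewrite measureD; [|exact: qb_meas|exact: qb_meas|]; last first.
  by apply: (le_lt_trans (probability_le1 _ (qb_meas _ _ _ _ _))); rewrite ltry.
have -> : qb (e :: U) F u' c d `&` qb (e :: U) F u'' c d = qb (e :: U) F u'' c d.
  by apply/seteqP; split=> w; [case|move=> h; split=> //; exact: YX].
rewrite -[X in (X - _)%E = _]/(P (qb (e :: U) F u' c d)) -[X in (_ - X)%E = _]/(P (qb (e :: U) F u'' c d)).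
rewrite HX HY.
rewrite -EFinB; congr (_%:E).
have eU' : undup (e :: U) = e :: undup U by rewrite /= (negbTE eU).
rewrite eU' !big_cons /u' /u'' !eqxx.
have -> : \prod_(j <- undup U) clamp01 (if j == e then d e else u j) = \prod_(j <- undup U) clamp01 (u j).
  apply: eq_big_seq => x; rewrite mem_undup => xU; case: eqP => // xe.
  by move: eU; rewrite -xe xU.
have -> : \prod_(j <- undup U) clamp01 (if j == e then c e else u j) = \prod_(j <- undup U) clamp01 (u j).
  apply: eq_big_seq => x; rewrite mem_undup => xU; case: eqP => // xe.
  by move: eU; rewrite -xe xU.
rewrite /len (max_r (_ : 0 <= _)); last by rewrite subr_ge0 clamp_mono// ltW.
ring.
Qed.

End box.



Section affine.
Variables (R : realType) (E : countType).
Local Notation O := (Omega E R).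

Definition aff (al be : E -> R) (w : O) : O := fun e => al e * w e + be e.

Lemma aff_meas al be : measurable_fun setT (aff al be).
Proof.
apply: (@measurability _ _ O O setT (aff al be) (@coord_sets E R)) => //.
move=> _ [X [e [B [mB ->]]] <-].
have mg : measurable_fun setT (fun y : R => al e * y + be e).
  by apply: measurable_funD => //; apply: measurable_funM.
rewrite setTI.
suff -> : aff al be @^-1` ((fun w : O => w e) @^-1` B) = [set w : O | (setT `&` (fun y => al e * y + be e) @^-1` B) (w e)].
  by apply: mcoord; exact: mg.
by apply/seteqP; split => w /=; rewrite /aff /=; [move=> h; split|case].
Qed.

Lemma aff_cancel al be : (forall e, al e != 0) ->
  cancel (aff al be) (aff (fun e => (al e)^-1) (fun e => - be e / al e)).
Proof. by move=> h w; apply/funext => e; rewrite /aff; field. Qed.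

Lemma aff_cancel' al be : (forall e, al e != 0) ->
  cancel (aff (fun e => (al e)^-1) (fun e => - be e / al e)) (aff al be).
Proof. by move=> h w; apply/funext => e; rewrite /aff; field. Qed.

End affine.

Lemma len_aff (R : realType) (al be y : R) : 0 < al -> 0 <= be -> al + be <= 1 -> y <= 1 ->
  len (be) (al * y + be) = al * len 0 y.
Proof.
rewrite /len => a0 b0 ab y1.
have c0 : clamp01 (0 : R) = 0 by rewrite clamp_neg.
have cb : clamp01 be = be by rewrite clamp_id // b0 /=; lra.
rewrite c0 subr0 cb.
have [y0|y0] := leP y 0.
  rewrite (clamp_neg y0) maxxx mulr0 max_l // subr_le0.
  rewrite -{2}cb clamp_mono //.
  have : al * y <= 0 by nra.
  lra.
have ay : al * y <= al by nra.
rewrite (clamp_id (t := y)); last by rewrite ltW.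
rewrite clamp_id; last by apply/andP; split; nra.
rewrite addrK !max_r //; [exact: ltW | nra].
Qed.

Section unique.
Variables (R : realType) (E : countType).
Local Notation O := (Omega E R).
Variable P : probability O R.
Hypothesis hP : uniform_product P.
Variables (S : seq E) (al be : E -> R).
Hypotheses (uS : uniq S) (alpos : forall e, 0 < al e)
  (out : forall e, e \notin S -> al e = 1 /\ be e = 0)
  (be0 : forall e, 0 <= be e) (ab1 : forall e, e \in S -> al e + be e <= 1).

Let ali := fun e => (al e)^-1.
Let bei := fun e => - be e / al e.
Let Ti := aff ali bei.
Let al0 e : al e != 0. Proof. by rewrite gt_eqF. Qed.

Let Q : set O := qb [::] S (fun _ => 0) (fun _ => 0) (fun _ => 1).
Let mQ : measurable Q. Proof. exact: qb_meas. Qed.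
Let mTi : measurable_fun setT Ti. Proof. exact: aff_meas. Qed.

Let mTiX X : measurable X -> measurable (Ti @^-1` X).
Proof. by move=> mX; have := mTi measurableT mX; rewrite setTI. Qed.

Definition m1 (X : set O) : \bar R := P (Ti @^-1` (X `&` Q)).
Let m1_0 : m1 set0 = 0%E. Proof. by rewrite /m1 set0I preimage_set0 measure0. Qed.
Let m1_ge0 X : (0 <= m1 X)%E. Proof. exact: measure_ge0. Qed.
Let m1_sa : semi_sigma_additive m1.
Proof.
move=> F mF tF mUF; rewrite /m1 setI_bigcupl preimage_bigcup.
apply: measure_semi_sigma_additive.
- by move=> n; apply: mTiX; apply: measurableI.
- apply/trivIsetP => i j _ _ ij; rewrite -preimage_setI setIACA setIid.
  by move/trivIsetP : tF => /(_ i j Logic.I Logic.I ij) ->; rewrite set0I preimage_set0.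
- rewrite -preimage_bigcup -setI_bigcupl; apply: mTiX; exact: measurableI.
Qed.
HB.instance Definition _ := isMeasure.Build _ _ _ m1 m1_0 m1_ge0 m1_sa.

Let J := \prod_(e <- S) al e.
Let J0 : 0 <= J. Proof. by apply: prodr_ge0 => e _; apply: ltW. Qed.
Let m2 := mscale (NngNum J0) (mrestr P mQ).

Let G : set (set O) := [set A | exists F x, A = qb F [::] x x x].

Let Gm : G `<=` measurable.
Proof. by move=> _ [F [x ->]]; exact: qb_meas. Qed.

Let sub_G (X : set O) : measurable X -> <<s G >> X.
Proof.
pose GT := g_sigma_algebraType G.
have hc e : measurable_fun (setT : set GT) (fun w : GT => (w : E -> R) e).
  apply: (@measurability _ _ GT R setT _ (@ocitv R)) => //.
  move=> _ [_ [[x1 x2] _ <-] <-].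
  rewrite setTI.
  have -> : (fun w : GT => (w : E -> R) e) @^-1` `]x1, x2]%classic =
     qb [:: e] [::] (fun _ => x2) (fun _ => x2) (fun _ => x2) `\`
     qb [:: e] [::] (fun _ => x1) (fun _ => x1) (fun _ => x1).
    apply/seteqP; split => w /=; rewrite in_itv /=.
      move=> /andP[h1 h2]; split.
        by split => // e'; rewrite inE => /eqP ->.
      by move=> [/(_ e (mem_head _ _))]; rewrite leNgt h1.
    move=> [[h1 _] h2]; rewrite h1 ?mem_head // andbT ltNge.
    apply/negP => h; apply: h2; split => // e'; rewrite inE => /eqP -> //.
  by apply: (@measurableD _ GT); apply: sub_sigma_algebra; eexists; eexists; reflexivity.
move=> mX; apply: (smallest_sub (smallest_sigma_algebra setT G) _ mX).
move=> _ [e [B [mB ->]]]; have := hc e measurableT B mB; rewrite setTI; exact.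
Qed.

Let setIG : setI_closed G.
Proof.
move=> _ _ [F [x ->]] [F' [x' ->]].
exists (F ++ F'), (fun e => if e \in F then (if e \in F' then Num.min (x e) (x' e) else x e) else x' e).
apply/seteqP; split => w /=.
  move=> [[h1 _] [h2 _]]; split => // e; rewrite mem_cat.
  case eF: (e \in F); case eF': (e \in F') => //= _.
  - by rewrite le_min h1 ?h2.
  - exact: h1.
  - exact: h2.
move=> [h _]; split; split => // e eF; have := h e; rewrite mem_cat eF ?orbT => /(_ isT).
  by case: (e \in F') => //; rewrite le_min => /andP[].
by case eF1: (e \in F) => //; rewrite le_min => /andP[].
Qed.

Let coord_iff (a b y c d : R) : 0 < a ->
  (c < a^-1 * y + - b / a <= d) = (a * c + b < y <= a * d + b).
Proof.
move=> a0; have -> : a^-1 * y + - b / a = (y - b) / a by field; rewrite gt_eqF.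
rewrite ltr_pdivlMr // ler_pdivrMr //.
by apply/idP/idP => /andP[h1 h2]; apply/andP; split; lra.
Qed.

Let Ti_out w e : e \notin S -> Ti w e = w e.
Proof.
by move=> /out [h1 h2]; rewrite /Ti /aff /ali /bei h1 h2 invr1 mul1r oppr0 mul0r addr0.
Qed.

Let AQ_eq F x : qb F [::] x x x `&` Q =
  qb [seq e <- F | e \notin S] S x (fun _ => 0) (fun e => if e \in F then Num.min 1 (x e) else 1).
Proof.
apply/seteqP; split => w /=.
  move=> [[h1 _] [_ h2]]; split.
    by move=> e; rewrite mem_filter => /andP[_ /h1].
  move=> e eS; have /andP[-> h] := h2 e eS; rewrite /=.
  by case eF: (e \in F) => //; rewrite le_min h h1.
move=> [h1 h2]; split; split => // e eF.
  case eS: (e \in S); last by apply: h1; rewrite mem_filter eS eF.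
  by have /andP[_] := h2 e eS; rewrite eF le_min => /andP[].
have /andP[-> h] := h2 e eF; rewrite /=; apply: (le_trans h).
by case: (e \in F) => //; rewrite ge_min lexx.
Qed.

Let TiAQ_eq F x : Ti @^-1` (qb F [::] x x x `&` Q) =
  qb [seq e <- F | e \notin S] S x be
    (fun e => al e * (if e \in F then Num.min 1 (x e) else 1) + be e).
Proof.
rewrite AQ_eq; apply/seteqP; split => w /=.
  move=> [h1 h2]; split.
    move=> e eU; have := h1 e eU; rewrite Ti_out //.
    by move: eU; rewrite mem_filter => /andP[].
  move=> e eS; have := h2 e eS; rewrite /Ti /aff /ali /bei coord_iff //.
  by rewrite mulr0 add0r.
move=> [h1 h2]; split.
  move=> e eU; rewrite Ti_out; first exact: h1.
  by move: eU; rewrite mem_filter => /andP[].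
move=> e eS; rewrite /Ti /aff /ali /bei coord_iff // mulr0 add0r; exact: h2.
Qed.

Let allS F : all (fun e => e \notin [seq e <- F | e \notin S]) S.
Proof. by apply/allP => e eS; rewrite mem_filter eS. Qed.

Let m1m2 : forall A, G A -> m1 A = m2 A.
Proof.
move=> _ [F [x ->]].
rewrite /m1 TiAQ_eq box_formula // /m2 /mscale /=.
rewrite -[X in (_ * X)%E]/(P (qb F [::] x x x `&` Q)) AQ_eq box_formula //.
rewrite -EFinM; congr (_%:E).
rewrite (@eq_big_seq _ _ _ _ S (fun e => len (be e) (al e * (if e \in F then Num.min 1 (x e) else 1) + be e)) (fun e => al e * len 0 (if e \in F then Num.min 1 (x e) else 1))); last first.
  move=> e eS; apply: len_aff => //; first exact: ab1.
  by case: (e \in F) => //; rewrite ge_min lexx.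
by rewrite big_split /= /J; ring.
Qed.

Lemma m1m2_meas X : measurable X -> m1 X = m2 X.
Proof.
move=> mX.
apply: (g_sigma_algebra_measure_unique G Gm (fun _ => setT)) => //.
- move=> _; exists [::], (fun _ => 0); apply/seteqP; split => w //=.
- by apply/seteqP; split => // w _; exists 0%N.
- move=> _; rewrite /m1; apply: (le_lt_trans (probability_le1 _ _)); last by rewrite ltry.
  by apply: mTiX; apply: measurableI.
- exact: sub_G.
Qed.

Let PQ1 : P Q = 1%E.
Proof.
rewrite /Q box_formula //; last by apply/allP.
rewrite big_nil mul1r big1 // => e _.
by rewrite /len clamp_ge1 // clamp_neg // subr0 max_r.
Qed.

Lemma T_bound D : measurable D -> ((\prod_(e <- S) al e)%:E * P D <= P (Ti @^-1` D))%E.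
Proof.
move=> mD.
have PD : P D = P (D `&` Q).
  rewrite (measureDI P mD mQ).
  rewrite (subset_measure0 (B := ~` Q)) ?add0e //.
  - exact: measurableD.
  - exact: measurableC.
  - by have := probability_setC P mQ; rewrite PQ1 subee.
rewrite PD.
have := m1m2_meas mD; rewrite /m1 /m2 /mscale /mrestr /= => <-.
apply: le_measure; rewrite ?inE; [apply: mTiX; exact: measurableI|exact: mTiX|].
by move=> w /= [].
Qed.

End unique.



Section mainsec.
Variables (R : realType) (E : countType).
Local Notation O := (Omega E R).
Variables (P : probability O R) (hP : uniform_product P)
  (A B : set O) (a b : R) (s : nat) (Phi : O -> O).
Hypotheses (mA : measurable A) (mB : measurable B)
  (ha : 0 < a < 1) (hb : 0 < b < 1)
  (PhiAB : Phi @` A `<=` B) (mPhi : measurable_fun A Phi)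
  (hS : forall w', (Phi @` A) w' ->
     exists S : seq E, (size S <= s)%N /\
       forall w, A w -> Phi w = w' ->
         (forall e, e \notin S -> w e = w' e) /\
         exists L : set E, L `<=` [set e | e \in S] /\
           (forall e, L e -> w e = a^-1 * w' e) /\
           (forall e, e \in S -> ~ L e -> w e = (w' e - b) / (1 - b))).

Let a0 : 0 < a. Proof. by case/andP: ha. Qed.
Let a1 : a < 1. Proof. by case/andP: ha. Qed.
Let b0 : 0 < b. Proof. by case/andP: hb. Qed.
Let b1 : b < 1. Proof. by case/andP: hb. Qed.

Definition alp (p : seq E * seq E) e : R :=
  if e \in p.1 then (if e \in p.2 then a else 1 - b) else 1.
Definition bep (p : seq E * seq E) e : R :=
  if e \in p.1 then (if e \in p.2 then 0 else b) else 0.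
Let Tp p := aff (alp p) (bep p).
Let Tip p := aff (fun e => (alp p e)^-1) (fun e => - bep p e / alp p e).
Let valid (p : seq E * seq E) := uniq p.1 && (size p.1 <= s)%N.
Let raw p : set O := if valid p then [set w | A w /\ Phi w = Tp p w] else set0.
Let pk (k : nat) : seq E * seq E := odflt ([::], [::]) (unpickle k).
Let rawk k := raw (pk k).
Let Dk k := seqDU rawk k.
Let Ck k := Tip (pk k) @^-1` Dk k.

Let alp_pos p e : 0 < alp p e.
Proof. by rewrite /alp; have := a0; have := b1; case: ifP => _; [case: ifP => _|]; lra. Qed.

Let mcoordf (e : E) : measurable_fun setT (fun v : O => v e).
Proof. by move=> _ Y mY; rewrite setTI; exact: mcoord. Qed.

Let raw_meas p : measurable (raw p).
Proof.
rewrite /raw; case: ifP => _; last exact: measurable0.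
pose Z (n : nat) : set O := if (unpickle n : option E) is Some e then
  A `&` (fun w => Phi w e - Tp p w e) @^-1` [set 0] else setT.
have mZ n : measurable (Z n).
  rewrite /Z; case: (unpickle n) => [e|]; last exact: measurableT.
  apply: measurable_funB; [|apply: measurable_funTS|exact: mA|exact: measurable_set1].
    exact: (measurableT_comp (mcoordf e) mPhi).
  exact: (measurableT_comp (mcoordf e) (aff_meas _ _)).
rewrite (_ : [set w | A w /\ Phi w = Tp p w] = A `&` \bigcap_n Z n).
  by apply: measurableI => //; exact: bigcapT_measurable.
apply/seteqP; split => w /=.
  move=> [Aw ew]; split => // n _; rewrite /Z; case: (unpickle n) => // e.
  by split => //=; rewrite ew subrr.
move=> [Aw h]; split => //; apply/funext => e.
have := h (pickle e) Logic.I; rewrite /Z pickleK => -[_ /=] /eqP.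
by rewrite subr_eq0 => /eqP.
Qed.

Let cover : A = \bigcup_k rawk k.
Proof.
apply/seteqP; split => w; last first.
  by move=> [k _]; rewrite /rawk /raw; case: ifP => // _ [].
move=> Aw.
have [S [sS hSw]] := hS (ex_intro2 _ _ w Aw erefl).
have [hout [L [LS [hL hnL]]]] := hSw w Aw erefl.
pose p := (undup S, [seq e <- undup S | `[< L e >]]).
exists (pickle p) => //; rewrite /rawk /pk pickleK /= /raw.
have -> : valid p by rewrite /valid /= undup_uniq (leq_trans (size_undup _) sS).
split => //; apply/funext => e; rewrite /Tp /aff /alp /bep /=.
have a0' := a0; have b1' := b1.
case eS: (e \in undup S).
  rewrite mem_filter eS andbT; case: (asboolP (L e)) => Le.
    by rewrite hL //; field; rewrite gt_eqF.
  rewrite hnL //; last by rewrite -mem_undup.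
  by field; rewrite subr_eq0 gt_eqF.
by rewrite hout ?mul1r ?addr0 // -mem_undup eS.
Qed.

Let mDk k : measurable (Dk k).
Proof.
rewrite /Dk /seqDU; apply: measurableD; first exact: raw_meas.
by apply: bigsetU_measurable => i _; exact: raw_meas.
Qed.

Let PA : P A = (\sum_(k <oo) P (Dk k))%E.
Proof.
rewrite {1}cover seqDU_bigcup_eq measure_bigcup //.
rewrite eseries_mkcond; congr (limn _); apply/funext => n.
by apply: eq_bigr => i _; rewrite in_setT.
Qed.

Let m := Num.min a (1 - b).
Let m0 : 0 < m. Proof. by rewrite /m lt_min a0 subr_gt0 b1. Qed.
Let m1 : m <= 1. Proof. by rewrite /m ge_min; have := a1; have := b0; lra. Qed.

Let alp_ge p e : m <= alp p e.
Proof.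
rewrite /alp; case: ifP => _; last exact: m1.
by case: ifP => _; rewrite /m ge_min lexx ?orbT.
Qed.

Let prod_ge p (r : seq E) : m ^+ size r <= \prod_(e <- r) alp p e.
Proof.
elim: r => [|e r IH]; first by rewrite big_nil expr0.
rewrite big_cons /= exprS; apply: ler_pM => //; [exact: ltW|exact: exprn_ge0 (ltW m0)].
Qed.

Let PDk k : (P (Dk k) <= ((m ^+ s)^-1)%:E * P (Ck k))%E.
Proof.
set p := pk k.
case vp: (valid p); last first.
  have -> : Dk k = set0.
    by apply/seteqP; split => w //; rewrite /Dk /seqDU /rawk /raw -/p vp => -[].
  by rewrite measure0 mule_ge0 // lee_fin invr_ge0 exprn_ge0 // ltW.
move: vp; rewrite /valid => /andP[uS sS].
have hT := @T_bound R E P hP p.1 (alp p) (bep p) uS (alp_pos p) _ _ _ (Dk k) (mDk k).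
have {hT} hT : ((\prod_(e <- p.1) alp p e)%:E * P (Dk k) <= P (Ck k))%E.
  apply: hT.
  - by move=> e h; rewrite /alp /bep (negbTE h).
  - move=> e; rewrite /bep; have := b0; case: ifP => _; [case: ifP => _|]; lra.
  - move=> e h; rewrite /alp /bep h; have := b0; have := a1; case: ifP => _; lra.
have Jm : m ^+ s <= \prod_(e <- p.1) alp p e.
  apply: le_trans (prod_ge p p.1).
  rewrite -(subnKC sS) exprD; apply: ler_piMr; first exact: exprn_ge0 (ltW m0).
  exact: exprn_ile1 (ltW m0) m1.
have mp : 0 < m ^+ s by rewrite exprn_gt0.
have Jp : 0 < \prod_(e <- p.1) alp p e by apply: lt_le_trans Jm.
apply: (le_trans (y := (((\prod_(e <- p.1) alp p e)^-1)%:E * P (Ck k))%E)).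
  by rewrite lee_pdivlMl.
apply: lee_wpmul2r => //; rewrite lee_fin lef_pV2 ?posrE //.
Qed.

Let Ck_prop k x : Ck k x ->
  [/\ A (Tip (pk k) x), Phi (Tip (pk k) x) = x & Dk k (Tip (pk k) x)].
Proof.
move=> h; have hD : Dk k (Tip (pk k) x) := h.
have : rawk k (Tip (pk k) x) by case: hD.
rewrite /rawk /raw; case: ifP => // _ [hA hP2]; split => //.
rewrite hP2 /Tp /Tip; apply: aff_cancel' => e; exact: lt0r_neq0 (alp_pos _ _).
Qed.

Let sum_card n (bb : 'I_n -> bool) :
  \sum_(k < n) (bb k)%:R = #|[set k : 'I_n | bb k]%SET|%:R :> R.
Proof.
rewrite -sum1_card natr_sum [RHS]big_mkcond /=; apply: eq_bigr => k _.
by rewrite inE; case: (bb k).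
Qed.

Let count_bound x n : (Phi @` A) x ->
  \sum_(k < n) \1_(Ck k) x <= (2 ^ s)%:R :> R.
Proof.
move=> hx; have [S0 [sS0 hS0]] := hS hx.
have -> : \sum_(k < n) \1_(Ck k) x = \sum_(k < n) ((x \in Ck k)%:R : R) by [].
rewrite sum_card ler_nat.
pose f (k : 'I_n) : {ffun 'I_(size S0) -> bool} :=
  [ffun i => Tip (pk k) x (tnth (in_tuple S0) i) == a^-1 * x (tnth (in_tuple S0) i)].
have key w : A w -> Phi w = x -> forall e, e \in S0 -> w e != a^-1 * x e ->
    w e = (x e - b) / (1 - b).
  move=> Aw Pw e eS ne; have [_ [L [_ [hL hnL]]]] := hS0 w Aw Pw.
  by apply: hnL => // Le; move: ne; rewrite hL // eqxx.
have inj : {in [set k : 'I_n | x \in Ck k]%SET &, injective f}.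
  move=> k1 k2; rewrite !inE => h1 h2 ef.
  have [Aw1 Pw1 D1] := Ck_prop h1; have [Aw2 Pw2 D2] := Ck_prop h2.
  have eqw : Tip (pk k1) x = Tip (pk k2) x.
    apply/funext => e.
    have [ho1 _] := hS0 _ Aw1 Pw1; have [ho2 _] := hS0 _ Aw2 Pw2.
    case eS: (e \in S0); last by rewrite ho1 ?eS // ho2 ?eS.
    have ix : (index e S0 < size S0)%N by rewrite index_mem.
    have ei : tnth (in_tuple S0) (Ordinal ix) = e by rewrite (tnth_nth e) /= nth_index.
    have := congr1 (fun g : {ffun 'I_(size S0) -> bool} => g (Ordinal ix)) ef; rewrite !ffunE ei.
    move=> h.
    have [E1|N1] := eqVneq (Tip (pk k1) x e) (a^-1 * x e).
      have : Tip (pk k2) x e == a^-1 * x e by rewrite -h E1 eqxx.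
      by move/eqP ->.
    have N2 : Tip (pk k2) x e != a^-1 * x e by rewrite -h N1.
    by rewrite (key _ Aw1 Pw1 e eS N1) (key _ Aw2 Pw2 e eS N2).
  apply: val_inj; apply: (@trivIset_seqDU _ rawk) => //.
  by exists (Tip (pk k1) x); split => //; rewrite eqw.
rewrite -(card_in_imset inj); apply: (leq_trans (max_card _)).
rewrite card_ffun card_bool card_ord; exact: leq_pexp2l.
Qed.

Let mCk k : measurable (Ck k).
Proof. by have := aff_meas (fun e => (alp (pk k) e)^-1) (fun e => - bep (pk k) e / alp (pk k) e) measurableT (mDk k); rewrite setTI. Qed.

Let ptw x : (\sum_(k <oo) (\1_(Ck k) x : R)%:E <= ((2 ^ s)%:R * (\1_B x : R))%:E)%E.
Proof.
case: (pselect ((Phi @` A) x)) => hx.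
  have Bx : B x := PhiAB hx.
  rewrite indicE mem_set // mulr1.
  apply: lime_le; first by apply: is_cvg_nneseries => n _ _; rewrite lee_fin indicE ler0n.
  apply: nearW => n; rewrite sumEFin lee_fin big_mkord; exact: count_bound.
rewrite eseries0; first by rewrite lee_fin mulr_ge0 // indicE ler0n.
move=> k _ _; rewrite indicE memNset //.
by move=> h; apply: hx; have [Aw Pw _] := Ck_prop h; exists (Tip (pk k) x).
Qed.

Let sumC : (\sum_(k <oo) P (Ck k) <= ((2 ^ s)%:R)%:E * P B)%E.
Proof.
have -> : (\sum_(k <oo) P (Ck k) = \int[P]_(x in setT) (\sum_(k <oo) (\1_(Ck k) x : R)%:E))%E.
  rewrite integral_nneseries //.
  - by apply: eq_eseriesr => k _; rewrite integral_indic // setIT.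
  - by move=> k; apply/measurable_EFinP; exact: measurable_indic.
apply: (le_trans (y := (\int[P]_(x in setT) ((2 ^ s)%:R * (\1_B x : R))%:E)%E)).
  apply: ge0_le_integral => //.
  - by move=> y _; apply: nneseries_ge0 => k _ _; rewrite lee_fin indicE ler0n.
  - apply: (@ge0_emeasurable_sum _ _ _ setT (fun k y => (\1_(Ck k) y : R)%:E) xpredT).
      by move=> k y _ _; rewrite lee_fin indicE ler0n.
    by move=> k _; apply/measurable_EFinP; exact: measurable_indic.
  - by apply/measurable_EFinP; apply: measurable_funM => //; exact: measurable_indic.
rewrite (integralZl_indic _ (fun _ => B)) //; last by move=> h; move: h; rewrite ltNge ler0n.
by rewrite integral_indic // setIT.
Qed.

Lemma main_ineq : (P A <= ((2 / m) ^+ s)%:E * P B)%E.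
Proof.
rewrite PA.
apply: (le_trans (y := (\sum_(k <oo) ((m ^- s)%:E * P (Ck k)))%E)).
  by apply: lee_nneseries => // n _ _; exact: measure_ge0.
rewrite nneseriesZl //.
apply: (le_trans (y := ((m ^- s)%:E * (((2 ^ s)%:R)%:E * P B))%E)).
  by apply: lee_wpmul2l => //; rewrite lee_fin invr_ge0 exprn_ge0 // ltW.
rewrite muleA -EFinM natrX exprMn exprVn mulrC.
by [].
Qed.

End mainsec.

Theorem mainTheorem15 (R : realType) (E : countType)
  (P : probability (Omega E R) R) (hP : uniform_product P)
  (A B : set (Omega E R)) (a b : R) (s : nat)
  (Phi : Omega E R -> Omega E R)
  (mA : measurable A) (mB : measurable B)
  (hA : A `<=` @cube E R) (hB : B `<=` @cube E R)
  (ha : 0 < a < 1) (hb : 0 < b < 1)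
  (PhiAB : Phi @` A `<=` B) (mPhi : measurable_fun A Phi)
  (hS : forall w', (Phi @` A) w' ->
     exists S : seq E, (size S <= s)%N /\
       forall w, A w -> Phi w = w' ->
         (forall e, e \notin S -> w e = w' e) /\
         exists L : set E, L `<=` [set e | e \in S] /\
           (forall e, L e -> w e = a^-1 * w' e) /\
           (forall e, e \in S -> ~ L e -> w e = (w' e - b) / (1 - b))) :
  (P A <= ((2 / Num.min a (1 - b)) ^+ s)%:E * P B)%E.
Proof.
exact: (@main_ineq R E P hP A B a b s Phi mA mB ha hb PhiAB mPhi hS).
Qed.
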